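(* Let $M$ be a finite matroid and let $d$ be the size of its largest circuit. Then $\mathrm{bd}(M)\ge\log_2 d$.
   Context: For a rooted tree $T$, $\|T\|$ is its number of edges and its depth is the number of edges of a longest root-to-leaf path. A depth-decomposition of a finite matroid $M$ (rank function $r$) is a pair $(T,f)$ with $T$ a rooted tree and $f:M\to V(T)$ such that (1) $r(M)=\|T\|$ and (2) $r(X)\le\|T^*(X)\|$ for every $X\subseteq M$, where $T^*(X)$ is the union of the paths from the root to all vertices of $f(X)$. The branch-depth $\mathrm{bd}(M)$ is the minimum depth of $T$ over all depth-decompositions $(T,f)$ of $M$. *)

(* Defs.v *)
From HB Require Import structures.
From mathcomp Require Import all_boot.
Set Implicit Arguments. Unset Strict Implicit. Unset Printing Implicit Defensive.

Record matroid (E : finType) := Matroid {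
  mrank : {set E} -> nat;
  mrank_card : forall X : {set E}, mrank X <= #|X|;
  mrank_mono : forall X Y : {set E}, X \subset Y -> mrank X <= mrank Y;
  mrank_submod : forall X Y : {set E},
      mrank (X :|: Y) + mrank (X :&: Y) <= mrank X + mrank Y
}.

Section MatroidDefs.
Variables (E : finType) (M : matroid E).

Definition indep (X : {set E}) : bool := mrank M X == #|X|.

Definition circuit (C : {set E}) : bool :=
  ~~ indep C && [forall X : {set E}, (X \proper C) ==> indep X].

(* size of a largest circuit (0 if there is no circuit) *)
Definition max_circuit_size : nat :=
  \max_(C : {set E} | circuit C) #|C|.
End MatroidDefs.

(* Rooted trees: a finite vertex type V, a root, and a parent map; the
   edges are {v, par v} for v <> root. *)
Section Trees.
Variables (V : finType) (root : V) (par : V -> V).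

Definition is_rooted_tree : Prop :=
  par root = root /\ forall v : V, exists n, iter n par v = root.

Definition anc (v : V) : {set V} :=
  [set u | [exists n : 'I_#|V|, iter n par v == u]].

Definition tree_size : nat := #|V| - 1.

(* ||T^*(A)|| for a set A of vertices: edges of the union of the root-paths
   to vertices of A; each such edge is identified with its lower endpoint,
   a non-root vertex. *)
Definition subtree_size (A : {set V}) : nat :=
  #|(\bigcup_(a in A) anc a) :\ root|.

Definition tree_depth : nat := \max_(v : V) #|anc v :\ root|.
End Trees.

Definition depth_decomposition (E : finType) (M : matroid E)
    (V : finType) (root : V) (par : V -> V) (f : E -> V) : Prop :=
  [/\ is_rooted_tree root par,
      mrank M [set: E] = tree_size V
    & forall X : {set E}, mrank M X <= subtree_size root par (f @: X)].

(* Main.v *)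
Require Import Defs.
From mathcomp Require Import all_boot zify.
Set Implicit Arguments. Unset Strict Implicit. Unset Printing Implicit Defensive.


Section Tree.
Variables (V : finType) (par : V -> V).

Lemma iter_anc n v : iter n par v \in anc par v.
Proof.
have fc := fconnect_iter par n v.
have lt := findex_max fc.
have ord : order par v <= #|V| by rewrite /order max_card.
rewrite inE; apply/existsP; exists (Ordinal (leq_trans lt ord)) => /=.
by rewrite iter_findex.
Qed.

Lemma ancP u v : reflect (exists n, iter n par v = u) (u \in anc par v).
Proof.
apply: (iffP idP).
  by rewrite inE => /existsP [n /eqP <-]; exists n.
by move=> [n <-]; apply: iter_anc.
Qed.

Lemma anc_self v : v \in anc par v.
Proof. exact: (iter_anc 0). Qed.

Lemma anc_trans u v x : u \in anc par v -> v \in anc par x -> u \in anc par x.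
Proof.
move=> /ancP [i <-] /ancP [j <-]; apply/ancP; exists (i + j).
by rewrite iterD.
Qed.

Lemma anc_sub v x : v \in anc par x -> anc par v \subset anc par x.
Proof. by move=> H; apply/subsetP => u Hu; apply: anc_trans Hu H. Qed.

Lemma anc_comp u v x : u \in anc par x -> v \in anc par x ->
  (u \in anc par v) || (v \in anc par u).
Proof.
move=> /ancP [i <-] /ancP [j <-].
case: (leqP i j) => H.
  apply/orP; right; apply/ancP; exists (j - i); by rewrite -iterD subnK.
apply/orP; left; apply/ancP; exists (i - j); rewrite -iterD subnK //; exact: ltnW.
Qed.
End Tree.

Section Comb.
Variables (V : finType) (par : V -> V) (E : finType) (f : E -> V) (C : {set E}).

Definition P (X : {set E}) : {set V} := \bigcup_(x in X) anc par (f x).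
Definition Own (w : {set V}) (T : {set E}) : {set V} :=
  [set v in w | (v \in P T) && [forall y in C, (v \in anc par (f y)) ==> (y \in T)]].
Definition ht (w : {set V}) (T : {set E}) := \max_(x in T) #|Own w T :&: anc par (f x)|.

Lemma PP (v : V) (X : {set E}) :
  reflect (exists2 x, x \in X & v \in anc par (f x)) (v \in P X).
Proof. exact: bigcupP. Qed.

Lemma OwnP (w : {set V}) (T : {set E}) (v : V) : reflect [/\ v \in w, v \in P T &
   forall y, y \in C -> v \in anc par (f y) -> y \in T] (v \in Own w T).
Proof.
rewrite inE; apply: (iffP idP).
  case/andP=> a /andP [b /forall_inP c]; split=> // y yC; exact/implyP/c.
case=> a b c; rewrite a b /=; apply/forall_inP=> y yC; apply/implyP; exact: c.
Qed.

Lemma Own_sub_w (w : {set V}) (T : {set E}) : Own w T \subset w.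
Proof. by apply/subsetP=> v /OwnP []. Qed.

Lemma Own_mono (w : {set V}) (T T' : {set E}) : T \subset T' -> T' \subset C -> Own w T \subset Own w T'.
Proof.
move=> sTT' sT'C; apply/subsetP=> v /OwnP [a /PP [x xT vx] c].
apply/OwnP; split=> //; first by apply/PP; exists x => //; exact: (subsetP sTT').
by move=> y yC vy; apply: (subsetP sTT'); apply: c.
Qed.

Lemma Own_monow (w w' : {set V}) (T : {set E}) : w \subset w' -> Own w T \subset Own w' T.
Proof.
move=> sw; apply/subsetP=> v /OwnP [a b c]; apply/OwnP; split=> //.
exact: (subsetP sw).
Qed.

Lemma main2 k : forall (w : {set V}) (T : {set E}), #|Own w T| + #|T| <= k ->
  (forall T' : {set E}, T' \subset C -> T' != set0 -> #|Own w T'| < #|T'|) ->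
  T \subset C -> T != set0 -> #|T| <= (#|T| - #|Own w T|) * 2 ^ ht w T.
Proof.
elim: k => [|k IH] w T Hk Hw TC Tn0.
  have : 0 < #|T| by rewrite card_gt0.
  move: Hk; rewrite leqn0 addn_eq0 => /andP [_ /eqP ->] //.
have HoT := Hw T TC Tn0.
case: (set_0Vmem (Own w T)) => [Own0 | [u0 u0O]].
  by rewrite Own0 cards0 subn0 leq_pmulr // expn_gt0.
pose u := [arg min_(u < u0 in Own w T) #|anc par u|].
have [uO umin] : u \in Own w T /\ forall v, v \in Own w T -> #|anc par u| <= #|anc par v|.
  rewrite /u; case: arg_minnP => // v vO vmin; split=> //.
have [uw uP uC] := OwnP _ _ _ uO.
pose Tu := [set x in T | u \in anc par (f x)].
have TuT : Tu \subset T by apply/subsetP=> x; rewrite inE => /andP [].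
have Tun0 : Tu != set0.
  case/PP: uP => x xT ux; apply/set0Pn; exists x; by rewrite inE xT.
have htpos : forall x, x \in T -> #|Own w T :&: anc par (f x)| <= ht w T.
  by move=> x xT; rewrite /ht (bigD1 x) //= leq_maxl.
case: (eqVneq Tu T) => [TuE | TuN].
-
  pose w' := w :\ u.
  have Own' : Own w' T = Own w T :\ u.
    apply/setP=> v; rewrite !inE; apply/idP/idP.
      move=> /andP [/andP [vu vw] rest]; by rewrite vu vw rest.
    move=> /andP [vu /andP [vw rest]]; by rewrite vu vw rest.
  have Hw' : forall T' : {set E}, T' \subset C -> T' != set0 -> #|Own w' T'| < #|T'|.
    move=> T' a b; apply: leq_ltn_trans (Hw T' a b); apply: subset_leq_card.
    by apply: Own_monow; apply: subsetDl.
  have cOwn : #|Own w' T| = (#|Own w T|).-1 by rewrite Own' (cardsD1 u (Own w T)) uO.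
  have oge1 : 0 < #|Own w T| by rewrite card_gt0; apply/set0Pn; exists u.
  have IH' := IH w' T _ Hw' TC Tn0.
  have : #|T| <= (#|T| - #|Own w' T|) * 2 ^ ht w' T.
    apply: IH'; rewrite cOwn; move: Hk; rewrite -(prednK oge1) addSn ltnS //.
  have [x xT] := set0Pn _ Tn0.
  have xTu : x \in Tu by rewrite TuE.
  move: (xTu); rewrite inE => /andP [_ ux].
  have hpos : 0 < ht w T.
    apply: leq_trans (htpos x xT); rewrite card_gt0; apply/set0Pn; exists u.
    by rewrite inE uO ux.
  have ht' : ht w' T <= (ht w T).-1.
    rewrite /ht; apply/bigmax_leqP => y yT.
    have yTu : y \in Tu by rewrite TuE.
    move: yTu; rewrite inE => /andP [_ uy].
    have := htpos y yT.
    rewrite Own' setIDAC (cardsD1 u (Own w T :&: anc par (f y))) inE uO uy /= add1n.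
    move=> h; rewrite -ltnS prednK //.
  move=> H; apply: (leq_trans H); rewrite cOwn.
  have e : 2 ^ ht w T = 2 * 2 ^ (ht w T).-1 by rewrite -expnS prednK.
  rewrite e; apply: leq_trans (leq_mul (leqnn _) (leq_pexp2l _ ht')) _ => //.
  rewrite mulnA leq_mul2r; apply/orP; right.
  move: HoT oge1; lia.
- have key : forall v y z, v \in Own w T -> v \in anc par (f y) -> y \in Tu ->
      z \in C -> v \in anc par (f z) -> z \in Tu.
    move=> v y z vO vy yTu zC vz.
    have zT : z \in T by case/OwnP: vO => _ _; apply.
    rewrite inE zT /=.
    move: yTu; rewrite inE => /andP [_ uy].
    have uv : u \in anc par v.
      case/orP: (anc_comp uy vy) => // vu.
      have := umin v vO.
      rewrite (geq_leqif (subset_leqif_card (anc_sub vu))) => /subsetP; apply.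
      exact: anc_self.
    exact: anc_trans uv vz.
  pose T' := T :\: Tu.
  have TuC : Tu \subset C := subset_trans TuT TC.
  have T'T : T' \subset T := subsetDl _ _.
  have T'C : T' \subset C := subset_trans T'T TC.
  have T'n0 : T' != set0.
    apply/negP => /eqP H; move: TuN; rewrite eqEsubset TuT /=.
    apply/negP/negPn/subsetP => x xT; apply/negPn/negP => xn.
    have : x \in T' by rewrite inE xn xT.
    by rewrite H inE.
  have cT : #|T| = #|Tu| + #|T'|.
    by rewrite -(cardsID Tu T) (setIidPr TuT).
  have OwnU : Own w T = Own w Tu :|: Own w T'.
    apply/eqP; rewrite eqEsubset; apply/andP; split; last first.
      by rewrite subUset !Own_mono.
    apply/subsetP=> v vO; have [vw vP vC] := elimT (OwnP _ _ _) vO.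
    case/PP: (vP) => x xT vx.
    case: (boolP (x \in Tu)) => xTu.
      rewrite inE; apply/orP; left; apply/OwnP; split=> //.
        by apply/PP; exists x.
      move=> y yC vy; exact: key vO vx xTu yC vy.
    rewrite inE; apply/orP; right; apply/OwnP; split=> //.
      by apply/PP; exists x => //; rewrite inE xTu.
    move=> y yC vy; rewrite inE vC // andbT.
    by apply/negP => yTu; move/negP: xTu; apply; apply: key vO vy yTu (subsetP TC x xT) vx.
  have OwnI : Own w Tu :&: Own w T' = set0.
    apply/setP=> v; rewrite in_setI in_set0; apply/negP => /andP [/OwnP [_ /PP [x xTu vx] _] /OwnP [_ _ c]].
    have := c x (subsetP TuC x xTu) vx; by rewrite inE xTu.
  have cO : #|Own w T| = #|Own w Tu| + #|Own w T'|.
    by rewrite OwnU cardsU OwnI cards0 subn0.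
  have HTu := Hw Tu TuC Tun0.
  have HT' := Hw T' T'C T'n0.
  have ltTu : 0 < #|T'| by rewrite card_gt0.
  have ltT' : 0 < #|Tu| by rewrite card_gt0.
  have k1 : #|Own w Tu| + #|Tu| <= k.
    rewrite -ltnS; apply: leq_trans Hk; rewrite cO cT; move: ltTu; clear; lia.
  have k2 : #|Own w T'| + #|T'| <= k.
    rewrite -ltnS; apply: leq_trans Hk; rewrite cO cT; move: ltT'; clear; lia.
  have IH1 := IH w Tu k1 Hw TuC Tun0.
  have IH2 := IH w T' k2 Hw T'C T'n0.
  have hle : forall T0 : {set E}, T0 \subset T -> ht w T0 <= ht w T.
    move=> T0 T0T; rewrite /ht; apply/bigmax_leqP => y yT0.
    apply: leq_trans (htpos y (subsetP T0T y yT0)).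
    apply: subset_leq_card; apply: setSI; apply: Own_mono => //.
  have e1 := leq_pexp2l (isT : 0 < 2) (hle Tu TuT).
  have e2 := leq_pexp2l (isT : 0 < 2) (hle T' T'T).
  rewrite cT cO.
  apply: leq_trans (leq_add IH1 IH2) _.
  have -> : #|Tu| + #|T'| - (#|Own w Tu| + #|Own w T'|) =
      (#|Tu| - #|Own w Tu|) + (#|T'| - #|Own w T'|).
    move: HTu HT'; clear; lia.
  rewrite mulnDl; apply: leq_add; exact: leq_mul.
Qed.
End Comb.

Section Main.
Variables (E : finType) (M : matroid E) (V : finType) (root : V) (par : V -> V) (f : E -> V).
Hypothesis DD : depth_decomposition M root par f.

Local Notation r := (mrank M).
Local Notation PX := (P par f).

Lemma r0 : r set0 = 0.
Proof. by apply/eqP; rewrite -leqn0 -(cards0 E) mrank_card. Qed.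

Lemma r1 e : r [set e] <= 1.
Proof. by rewrite -(cards1 e) mrank_card. Qed.

Lemma P1 e : PX [set e] = anc par (f e).
Proof. by rewrite /P big_set1. Qed.

Lemma PU e (X : {set E}) : PX (e |: X) = anc par (f e) :|: PX X.
Proof. by rewrite /P bigcup_setU big_set1. Qed.

Lemma P_mono (X Y : {set E}) : X \subset Y -> PX X \subset PX Y.
Proof.
move=> sXY; apply/subsetP => v /PP [x xX vx]; apply/PP; exists x => //.
exact: (subsetP sXY).
Qed.

Lemma restr n : forall S : {set E}, #|~: S| = n -> exists w : {set V},
  [/\ root \notin w, #|w| = r S & forall X : {set E}, X \subset S -> r X <= #|w :&: PX X|].
Proof.
case: DD => _ rT Hsub.
elim: n => [|n IH] S HS.
  have -> : S = setT.
    apply/setP=> x; rewrite inE; apply/negPn/negP => xS.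
    have : x \in ~: S by rewrite inE.
    by move: HS => /eqP; rewrite cards_eq0 => /eqP ->; rewrite inE.
  exists (setT :\ root); split.
  - by rewrite !inE eqxx.
  - rewrite rT /tree_size; have := cardsD1 root [set: V]; rewrite cardsT inE.
    move=> ->; by rewrite add1n subn1.
  - move=> X _; apply: leq_trans (Hsub X) _; rewrite /subtree_size.
    apply: subset_leq_card; apply/subsetP => v; rewrite !inE => /andP [vr /bigcupP [a /imsetP [x xX ->] va]].
    rewrite vr /=; apply/PP; by exists x.
have [e eS] : exists e, e \in ~: S.
  by apply/set0Pn; rewrite -card_gt0 HS.
have HS' : #|~: (e |: S)| = n.
  have -> : ~: (e |: S) = ~: S :\ e by apply/setP => x; rewrite !inE negb_or andbC.
  have : #|~: S| = (e \in ~: S) + #|(~: S) :\ e| := cardsD1 e (~: S).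
  by rewrite eS HS add1n => [[->]].
have [w' [rw' cw' Hw']] := IH _ HS'.
have eS' : e \notin S by move: eS; rewrite inE.
have rmono : r S <= r (e |: S) by apply: mrank_mono; apply: subsetUr.
have rup : r (e |: S) <= r S + r [set e].
  have := mrank_submod M [set e] S.
  have -> : [set e] :&: S = set0.
    by apply/setP => x; rewrite !inE; apply/negP => /andP [/eqP -> ]; apply/negP.
  by rewrite r0 addn0 [r S + _]addnC.
case: (eqVneq (r S) (r (e |: S))) => Heq.
  exists w'; split => //; first by rewrite Heq.
  move=> X XS; apply: Hw'; apply: subset_trans XS (subsetUr _ _).
have re : r (e |: S) = (r S).+1.
  have := r1 e; move: rmono rup Heq; clear; lia.
have re1 : 1 <= r [set e] by move: rup re; clear; lia.
have : 1 <= #|w' :&: anc par (f e)|.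
  by rewrite -P1; apply: leq_trans re1 (Hw' _ _); rewrite sub1set setU11.
rewrite card_gt0 => /set0Pn [u0 u0in].
pose u := [arg max_(u > u0 in w' :&: anc par (f e)) #|anc par u|].
have [uin umax] : u \in w' :&: anc par (f e) /\
    forall v, v \in w' :&: anc par (f e) -> #|anc par v| <= #|anc par u|.
  by rewrite /u; case: arg_maxnP.
move: (uin); rewrite inE => /andP [uw' ue].
exists (w' :\ u); split.
- by rewrite inE negb_and rw' orbT.
- have := cardsD1 u w'; rewrite uw' cw' re add1n => [[]] //.
- move=> X XS.
  case: (boolP (u \in PX X)) => uX; last first.
    have -> : (w' :\ u) :&: PX X = w' :&: PX X.
      apply/setP => v; rewrite !inE; case: (eqVneq v u) => [->|] //=.
      by rewrite (negbTE uX) andbF.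
    apply: Hw'; apply: subset_trans XS (subsetUr _ _).
  have rX : r X < r (e |: X).
    have := mrank_submod M (e |: X) S.
    have -> : (e |: X) :|: S = e |: S.
      by rewrite -setUA (setUidPr XS).
    have -> : (e |: X) :&: S = X.
      rewrite setIUl (setIidPl XS).
      have -> : [set e] :&: S = set0.
        by apply/setP => x; rewrite !inE; apply/negP => /andP [/eqP -> ]; apply/negP.
      by rewrite set0U.
    by rewrite re; move=> h; move: h; clear; lia.
  have HeX : r (e |: X) <= #|w' :&: PX (e |: X)|.
    apply: Hw'; by rewrite setUS.
  have EQ : w' :&: PX (e |: X) = w' :&: PX X.
    apply/eqP; rewrite eqEsubset; apply/andP; split; last by apply: setIS; apply: P_mono; apply: subsetUr.
    apply/subsetP => v; rewrite PU in_setI in_setU => /andP [vw /orP [ve|] ]; last by move=> vX; rewrite in_setI vw vX.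
    rewrite in_setI vw /=.
    case/PP: uX => x xX ux; apply/PP; exists x => //.
    case/orP: (anc_comp ue ve) => [uv|vu]; last exact: anc_trans vu ux.
    have vin : v \in w' :&: anc par (f e) by rewrite inE vw ve.
    have := umax v vin.
    rewrite (geq_leqif (subset_leqif_card (anc_sub uv))) => /subsetP H.
    exact: anc_trans (H _ (anc_self par v)) ux.
  have cc : #|w' :&: PX X| = (#|(w' :\ u) :&: PX X|).+1.
    by rewrite (cardsD1 u (w' :&: PX X)) in_setI uw' uX add1n setIDAC.
  move: rX HeX; rewrite EQ cc; clear; lia.
Qed.

Lemma final : max_circuit_size M <= 2 ^ tree_depth root par.
Proof.
rewrite /max_circuit_size; apply/bigmax_leqP => C /andP [nind /forallP prop].
have indp : forall X : {set E}, X \proper C -> r X = #|X|.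
  by move=> X XC; apply/eqP; move: (prop X); rewrite XC.
have rC : r C < #|C|.
  by rewrite ltn_neqAle mrank_card andbT; exact: nind.
have [w [rw cw Hw]] := restr (erefl #|~: C|).
have Cn0 : C != set0.
  apply/negP => /eqP C0; move: rC; by rewrite C0 r0 cards0.
have hyp : forall T' : {set E}, T' \subset C -> T' != set0 ->
    #|Own par f C w T'| < #|T'|.
  move=> T TC Tn0.
  have [x xT] := set0Pn _ Tn0.
  have prop' : C :\: T \proper C.
    apply/properP; split; first exact: subsetDl.
    by exists x; [exact: (subsetP TC) | rewrite inE xT].
  have rD := indp _ prop'.
  have HD := Hw (C :\: T) (subsetDl _ _).
  have cC : #|C| = #|T| + #|C :\: T| by rewrite -(cardsID T C) (setIidPr TC).
  have sub : Own par f C w T \subset w :\: PX (C :\: T).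
    apply/subsetP => v vO; have [vw _ vC] := elimT (OwnP _ _ _ _ _ _) vO.
    rewrite in_setD vw andbT; apply/negP => /PP [y yD vy].
    move: yD; rewrite in_setD => /andP [yT yC]; move: yT; rewrite (vC y yC vy) //.
  have := subset_leq_card sub; rewrite cardsD.
  have tpos : 0 < #|T| by rewrite card_gt0.
  move: HD rD cC rC cw tpos; clear; lia.
have [y yC] := set0Pn _ Cn0.
have M2 := main2 (leqnn _) hyp (subxx C) Cn0.
have own : #|C| - 1 <= #|Own par f C w C|.
  have prop' : C :\ y \proper C by rewrite properD1.
  have := Hw (C :\ y) (subsetDl _ _); rewrite indp // (cardsD1 y C) yC add1n subn1 /=.
  move=> h; apply: leq_trans h _; apply: subset_leq_card; apply/subsetP => v.
  rewrite in_setI => /andP [vw vP]; apply/OwnP; split=> //.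
  by apply: (subsetP (P_mono (subsetDl C [set y]))).
have ht : ht par f C w C <= tree_depth root par.
  rewrite /ht; apply/bigmax_leqP => x xC.
  apply: leq_trans (leq_bigmax (f x)).
  apply: subset_leq_card; apply/subsetP => v; rewrite in_setI => /andP [vO va].
  rewrite in_setD1 va andbT; apply/negP => /eqP vr; move: rw; rewrite -vr.
  by rewrite (subsetP (Own_sub_w _ _ _ _ _) v vO).
apply: leq_trans M2 _.
have -> : #|C| - #|Own par f C w C| = 1.
  have : #|Own par f C w C| < #|C| := hyp C (subxx C) Cn0.
  move: own; clear; lia.
by rewrite mul1n leq_pexp2l.
Qed.

End Main.

Theorem proposition3p4 (E : finType) (M : matroid E)
    (V : finType) (root : V) (par : V -> V) (f : E -> V) :
  depth_decomposition M root par f ->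
  max_circuit_size M <= 2 ^ tree_depth root par.
Proof. move=> DD; exact: (final DD). Qed.
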